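(* Let $\mathcal{JS}=(\mathcal F,\mathcal F_d,R,\mathcal B)$ be a justification system whose frame is complementary and whose branch evaluation $\mathcal B$ is consistent. Let $\tau$ be a positional (respectively general) strategy for $F$, $x\in\mathcal F_d$, and $n$ the node of $J_\tau(x)$ labelled $\sim x$ (respectively the root node of the tree $J_\tau(x)$, corresponding to the one-state path $x$). Then for every interpretation $\mathcal I$, $$\mathrm{val}(J_\tau(x),n,\mathcal I)=\sim\bigvee_{\sigma\in\mathfrak S_g(T)}u(x,\sigma,\tau).$$
   Context: Let $\mathcal F$ be a set (fact space) containing $\mathcal L=\{\mathbf t,\mathbf f,\mathbf u\}$ with an involution $\sim$ satisfying $\sim\mathbf t=\mathbf f$, $\sim\mathbf u=\mathbf u$, $\sim x\ne x$ for $x\ne\mathbf u$; $\sim A=\{\sim a:a\in A\}$. Truth order $\mathbf f<_t\mathbf u<_t\mathbf t$; $\bigwedge,\bigvee$ are glb/lub in $(\mathcal L,\le_t)$; $\sim$ reverses $\le_t$. A justification frame is $\mathcal{JF}=(\mathcal F,\mathcal F_d,R)$ with $\mathcal F_d\subseteq\mathcal F$, $\sim\mathcal F_d=\mathcal F_d$, $\mathcal F_d\cap\mathcal L=\emptyset$, $R\subseteq\mathcal F_d\times2^{\mathcal F}$ a set of rules $x\gets A$ with nonempty bodies, every $x\in\mathcal F_d$ heading a rule; $\mathcal F_o=\mathcal F\setminus\mathcal F_d$. A selection function for $x\in\mathcal F_d$ assigns to every body $A$ of a rule $x\gets A$ an element $s(A)\in A$; $\mathrm{Im}(s)$ is its image.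 $R^*$ is the set of rules $\sim x\gets\sim\mathrm{Im}(s)$ ($x\in\mathcal F_d$, $s$ a selection function for $x$); the frame is complementary if $R^*=R$. A justification is a directed graph $(N,E)$ with labelling $\ell:N\to\mathcal F$ such that every internal node $n$ has $\ell(n)\in\mathcal F_d$ and $\ell(n)\gets\{\ell(m):(n,m)\in E\}\in R$; locally complete if no leaf is labelled by a defined fact. A $\mathcal{JF}$-branch is an infinite sequence of defined facts or a finite sequence $x_0\to\cdots\to x_k$ ($k\ge1$) with $x_0,\dots,x_{k-1}\in\mathcal F_d$, $x_k\in\mathcal F_o$; $\sim b$ applies $\sim$ elementwise. $B_J(n)$ is the set of label sequences of maximal paths of $J$ starting at node $n$. A branch evaluation $\mathcal B$ maps $\mathcal{JF}$-branches to elements of $\mathcal F$; it is consistent if $\mathcal B(\sim b)=\sim\mathcal B(b)$ for all $b$. An interpretation is $\mathcal I:\mathcal F\to\mathcal L$ with $\mathcal I(\sim x)=\sim\mathcal I(x)$, $\mathcal I(l)=l$ on $\mathcal L$. $\mathrm{val}(J,n,\mathcal I)=\bigwedge_{b\in B_J(n)}\mathcal I(\mathcal B(b))$. Game graph $G_{\mathcal{JF}}$: states $S_T=\mathcal F$ (owned by $T$), $S_F=\{r_{x\gets A}:x\gets A\in R\}$ (owned by $F$), edges $(x,r_{x\gets A})$ and $(r_{x\gets A},y)$ for each rule $x\gets A$, $y\in A$. A play is an infinite path or a finite path ending in a state with no outgoing edge. A general strategy for $P\in\{T,F\}$ maps each finite path whose last state $s\in S_P$ has an outgoing edge to an outgoing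 edge of $s$; positional strategies depend only on the last state; $\mathfrak S_g(P)$ is the set of general strategies. A path $s_0s_1\cdots$ is consistent with a strategy $\rho$ of $P$ if $\rho(s_0\cdots s_i)=(s_i,s_{i+1})$ whenever $s_i\in S_P$ and $s_{i+1}$ exists; $\mathrm{play}(s,\sigma,\tau)$ is the unique play from $s$ consistent with $\sigma$ (for $T$) and $\tau$ (for $F$). For a play $p$, $b_p$ deletes rule symbols; $u(x,\sigma,\tau)=\mathcal I(\mathcal B(b_{\mathrm{play}(x,\sigma,\tau)}))$. The play tree of a general strategy $\rho$ in $x$ has as nodes the finite paths from $x$ consistent with $\rho$, labelled by their last state, with edges to one-step extensions; the play graph of a positional $\rho$ in $x$ is the subgraph of $G_{\mathcal{JF}}$ of states and edges on paths from $x$ consistent with $\rho$. Filtering out rule symbols: delete rule-symbol nodes and add $(n,m)$ whenever $(n,k),(k,m)$ were edges with $k$ a rule-symbol node. For a strategy $\tau$ of $F$, $J_\tau(x)$ is the filtered play graph (positional $\tau$) or filtered play tree (general $\tau$) of $\tau$ in $x$ with every label $y$ replaced by $\sim y$. *)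

(* Defs.v *)
From Stdlib Require Import List Arith ClassicalEpsilon.
Import ListNotations.
Set Implicit Arguments.
Unset Strict Implicit.

Inductive tv := Tt | Ff | Uu.

Definition tneg (v : tv) : tv :=
  match v with Tt => Ff | Ff => Tt | Uu => Uu end.

Definition tv_rank (v : tv) : nat :=
  match v with Ff => 0 | Uu => 1 | Tt => 2 end.
Definition tv_le (a b : tv) : Prop := tv_rank a <= tv_rank b.

Definition is_glb (S : tv -> Prop) (v : tv) : Prop :=
  (forall w, S w -> tv_le v w) /\
  (forall z, (forall w, S w -> tv_le z w) -> tv_le z v).
Definition is_lub (S : tv -> Prop) (v : tv) : Prop :=
  (forall w, S w -> tv_le w v) /\
  (forall z, (forall w, S w -> tv_le w z) -> tv_le v z).

Definition tv_inf (S : tv -> Prop) : tv := epsilon (inhabits Tt) (is_glb S).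
Definition tv_sup (S : tv -> Prop) : tv := epsilon (inhabits Ff) (is_lub S).

(* A set of facts containing L (via the injection emb) with involution ~ *)
Record fact_space := {
  fact :> Type;
  emb : tv -> fact;
  fneg : fact -> fact;
  emb_inj : forall a b, emb a = emb b -> a = b;
  fneg_invol : forall x, fneg (fneg x) = x;
  fneg_t : fneg (emb Tt) = emb Ff;
  fneg_u : fneg (emb Uu) = emb Uu;
  fneg_neq : forall x, x <> emb Uu -> fneg x <> x }.

Arguments emb {f} _.
Arguments fneg {f} _.

Record jframe (FS : fact_space) := {
  Fd : FS -> Prop;
  rule : FS -> (FS -> Prop) -> Prop;
  Fd_neg : forall x, Fd (fneg x) <-> Fd x;
  Fd_L : forall l, ~ Fd (emb l);
  rule_head : forall x A, rule x A -> Fd x;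
  rule_nonempty : forall x A, rule x A -> exists y, A y;
  rule_total : forall x, Fd x -> exists A, rule x A }.


Definition selection (FS : fact_space) (JF : jframe FS) (x : FS)
  (s : (FS -> Prop) -> FS) : Prop :=
  forall A, rule JF x A -> A (s A).

(* R^* : rules ~x <- ~Im(s) *)
Definition rule_star (FS : fact_space) (JF : jframe FS) (h : FS)
  (Bd : FS -> Prop) : Prop :=
  exists x s, Fd JF x /\ selection JF x s /\ h = fneg x /\
    (forall z, Bd z <-> exists A, rule JF x A /\ z = fneg (s A)).

Definition complementary (FS : fact_space) (JF : jframe FS) : Prop :=
  forall h Bd, rule JF h Bd <-> rule_star JF h Bd.

Inductive branch (F : Type) := BInf (b : nat -> F) | BFin (l : list F).
Arguments BInf {F} _.
Arguments BFin {F} _.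

Definition is_branch (FS : fact_space) (JF : jframe FS) (b : branch FS) : Prop :=
  match b with
  | BInf g => forall k, Fd JF (g k)
  | BFin l => exists l' y, l = l' ++ [y] /\ l' <> [] /\
                Forall (Fd JF) l' /\ ~ Fd JF y
  end.

Definition neg_branch (FS : fact_space) (b : branch FS) : branch FS :=
  match b with
  | BInf g => BInf (fun k => fneg (g k))
  | BFin l => BFin (map fneg l)
  end.

Definition consistent_be (FS : fact_space) (JF : jframe FS)
  (B : branch FS -> FS) : Prop :=
  forall b, is_branch JF b -> B (neg_branch b) = fneg (B b).

Definition is_interp (FS : fact_space) (Iv : FS -> tv) : Prop :=
  (forall x, Iv (fneg x) = tneg (Iv x)) /\ (forall l, Iv (emb l) = l).

(* ST x : state x in S_T = F ; SF x A : rule symbol r_{x <- A} (only those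
   with rule x A occur in edges) *)
Inductive state (F : Type) := ST (x : F) | SF (x : F) (A : F -> Prop).
Arguments ST {F} _.
Arguments SF {F} _ _.

Definition edge (FS : fact_space) (JF : jframe FS) (s s' : state FS) : Prop :=
  match s, s' with
  | ST x, SF y A => x = y /\ rule JF y A
  | SF x A, ST y => rule JF x A /\ A y
  | _, _ => False
  end.

Definition has_out (FS : fact_space) (JF : jframe FS) (s : state FS) : Prop :=
  exists s', edge JF s s'.

Inductive player := PT | PF.

Definition owned (F : Type) (P : player) (s : state F) : Prop :=
  match P, s with
  | PT, ST _ => True
  | PF, SF _ _ => True
  | _, _ => False
  end.

Definition is_T (F : Type) (s : state F) : Prop :=
  match s with ST _ => True | SF _ _ => False end.

Definition st_fact (F : Type) (s : state F) : F :=
  match s with ST y => y | SF y _ => y end.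

Definition last_opt (A : Type) (l : list A) : option A := hd_error (rev l).

Definition is_fpath (FS : fact_space) (JF : jframe FS) (p : list (state FS)) : Prop :=
  p <> [] /\
  forall i s s', nth_error p i = Some s -> nth_error p (S i) = Some s' ->
    edge JF s s'.

(* strategies: a general strategy maps a finite path (listed from its first
   state) to the next state, i.e. to the edge (last state, next state) *)
Definition strat (F : Type) := list (state F) -> state F.
Definition pstrat (F : Type) := state F -> state F.

Definition valid_gen (FS : fact_space) (JF : jframe FS) (P : player)
  (rho : strat FS) : Prop :=
  forall p s, is_fpath JF p -> last_opt p = Some s -> owned P s ->
    has_out JF s -> edge JF s (rho p).

Definition valid_pos (FS : fact_space) (JF : jframe FS) (P : player)
  (tau : pstrat FS) : Prop :=
  forall s, owned P s -> has_out JF s -> edge JF s (tau s).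

Definition gen_of_pos (FS : fact_space) (tau : pstrat FS) : strat FS :=
  fun p => tau (last p (ST (emb Tt))).

Inductive play (F : Type) := PInf (s : nat -> state F) | PFin (l : list (state F)).
Arguments PInf {F} _.
Arguments PFin {F} _.

Definition is_play (FS : fact_space) (JF : jframe FS) (p : play FS) : Prop :=
  match p with
  | PInf s => forall i, edge JF (s i) (s (S i))
  | PFin l => is_fpath JF l /\ forall s, last_opt l = Some s -> ~ has_out JF s
  end.

Definition starts_at (F : Type) (s0 : state F) (p : play F) : Prop :=
  match p with
  | PInf s => s 0 = s0
  | PFin l => hd_error l = Some s0
  end.

Definition consistent (F : Type) (rho : strat F) (P : player) (p : play F) : Prop :=
  match p with
  | PInf s => forall i, owned P (s i) -> rho (map s (seq 0 (S i))) = s (S i)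
  | PFin l => forall i si si', nth_error l i = Some si ->
      nth_error l (S i) = Some si' -> owned P si -> rho (firstn (S i) l) = si'
  end.

Definition the_play (FS : fact_space) (JF : jframe FS) (s0 : state FS)
  (sigma tau : strat FS) : play FS :=
  epsilon (inhabits (PFin []))
    (fun p => starts_at s0 p /\ is_play JF p /\ consistent sigma PT p /\
              consistent tau PF p).

(* b_p: delete the rule symbols.  Plays from a fact alternate
   fact, rule, fact, ... so in the infinite case the facts are at even
   positions. *)
Definition b_of_play (F : Type) (p : play F) : branch F :=
  match p with
  | PInf s => BInf (fun k => st_fact (s (2 * k)))
  | PFin l => BFin (flat_map (fun s => match s with ST y => [y] | SF _ _ => [] end) l)
  end.

Definition u (FS : fact_space) (JF : jframe FS) (B : branch FS -> FS)
  (Iv : FS -> tv) (x : FS) (sigma tau : strat FS) : tv :=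
  Iv (B (b_of_play (the_play JF (ST x) sigma tau))).

Record jgraph (F : Type) := {
  jnode : Type;
  jedge : jnode -> jnode -> Prop;
  jlab : jnode -> F }.
Arguments jnode {F} _.
Arguments jedge {F} _ _ _.
Arguments jlab {F} _ _.

(* b in B_J(n): b is the label sequence of a maximal path of J from n *)
Definition in_BJ (F : Type) (J : jgraph F) (n : jnode J) (b : branch F) : Prop :=
  match b with
  | BInf g => exists f : nat -> jnode J, f 0 = n /\
      (forall i, jedge J (f i) (f (S i))) /\ (forall i, g i = jlab J (f i))
  | BFin l => exists ns : list (jnode J), hd_error ns = Some n /\
      (forall i m m', nth_error ns i = Some m -> nth_error ns (S i) = Some m' ->
         jedge J m m') /\
      (forall m, last_opt ns = Some m -> forall m', ~ jedge J m m') /\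
      l = map (jlab J) ns
  end.

Arguments in_BJ {F} J n b.

Definition val (FS : fact_space) (J : jgraph FS) (n : jnode J)
  (B : branch FS -> FS) (Iv : FS -> tv) : tv :=
  tv_inf (fun v => exists b, in_BJ J n b /\ v = Iv (B b)).

Definition filter_neg (FS : fact_space) (N : Type) (E : N -> N -> Prop)
  (lab : N -> state FS) : jgraph FS :=
  {| jnode := { n : N | is_T (lab n) };
     jedge := fun n m => E (proj1_sig n) (proj1_sig m) \/
        exists k, ~ is_T (lab k) /\ E (proj1_sig n) k /\ E k (proj1_sig m);
     jlab := fun n => fneg (st_fact (lab (proj1_sig n))) |}.

Inductive reach_pos (FS : fact_space) (JF : jframe FS) (tau : pstrat FS)
  (x : FS) : state FS -> Prop :=
  | rp_refl : reach_pos JF tau x (ST x)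
  | rp_step : forall s s', reach_pos JF tau x s -> edge JF s s' ->
      (owned PF s -> s' = tau s) -> reach_pos JF tau x s'.

Definition J_pos (FS : fact_space) (JF : jframe FS) (tau : pstrat FS) (x : FS)
  : jgraph FS :=
  @filter_neg FS { s : state FS | reach_pos JF tau x s }
    (fun a b => edge JF (proj1_sig a) (proj1_sig b) /\
                (owned PF (proj1_sig a) -> proj1_sig b = tau (proj1_sig a)))
    (fun a => proj1_sig a).

Definition root_pos (FS : fact_space) (JF : jframe FS) (tau : pstrat FS) (x : FS)
  : jnode (J_pos JF tau x) :=
  exist (fun n : { s : state FS | reach_pos JF tau x s } => is_T (proj1_sig n))
    (exist _ (ST x) (rp_refl JF tau x)) I.

Definition tree_node (FS : fact_space) (JF : jframe FS) (tau : strat FS) (x : FS)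
  (p : list (state FS)) : Prop :=
  is_fpath JF p /\ hd_error p = Some (ST x) /\ consistent tau PF (PFin p).

Definition J_gen (FS : fact_space) (JF : jframe FS) (tau : strat FS) (x : FS)
  : jgraph FS :=
  @filter_neg FS { p : list (state FS) | tree_node JF tau x p }
    (fun a b => exists s, proj1_sig b = proj1_sig a ++ [s])
    (fun a => last (proj1_sig a) (ST x)).

Lemma tree_root (FS : fact_space) (JF : jframe FS) (tau : strat FS) (x : FS) :
  tree_node JF tau x [ST x].
Proof.
  split; [split; [discriminate|] | split; [reflexivity|]].
  - intros [|i] s s' _ H; simpl in H; [discriminate|destruct i; discriminate].
  - intros [|i] si si' _ H; simpl in H; [discriminate|destruct i; discriminate].
Qed.

Definition root_gen (FS : fact_space) (JF : jframe FS) (tau : strat FS) (x : FS)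
  : jnode (J_gen JF tau x) :=
  exist (fun n : { p : list (state FS) | tree_node JF tau x p } =>
           is_T (last (proj1_sig n) (ST x)))
    (exist _ [ST x] (tree_root JF tau x)) I.

(* Main.v *)
Require Import Defs.
From Stdlib Require Import List Arith Lia Classical ClassicalEpsilon FunctionalExtensionality ProofIrrelevance.
Import ListNotations.


Lemma rank_inj a b : tv_rank a = tv_rank b -> a = b.
Proof. destruct a, b; simpl; intros; congruence. Qed.

Lemma glb_exists (S : tv -> Prop) : exists v, is_glb S v.
Proof.
  destruct (classic (S Ff)) as [HF|HF].
  - exists Ff; split; [intros w _; unfold tv_le; simpl; lia|].
    intros z Hz; apply Hz; auto.
  - destruct (classic (S Uu)) as [HU|HU].
    + exists Uu; split.
      * intros w Hw; destruct w; unfold tv_le; simpl; try lia; contradiction.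
      * intros z Hz; apply Hz; auto.
    + exists Tt; split.
      * intros w Hw; destruct w; unfold tv_le; simpl; try lia; contradiction.
      * intros z _; destruct z; unfold tv_le; simpl; lia.
Qed.

Lemma lub_exists (S : tv -> Prop) : exists v, is_lub S v.
Proof.
  destruct (classic (S Tt)) as [HF|HF].
  - exists Tt; split; [intros w _; destruct w; unfold tv_le; simpl; lia|].
    intros z Hz; apply Hz; auto.
  - destruct (classic (S Uu)) as [HU|HU].
    + exists Uu; split.
      * intros w Hw; destruct w; unfold tv_le; simpl; try lia; contradiction.
      * intros z Hz; apply Hz; auto.
    + exists Ff; split.
      * intros w Hw; destruct w; unfold tv_le; simpl; try lia; contradiction.
      * intros z _; destruct z; unfold tv_le; simpl; lia.
Qed.

Lemma glb_unique S v w : is_glb S v -> is_glb S w -> v = w.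
Proof.
  intros [H1 H2] [H3 H4]. apply rank_inj.
  specialize (H2 w H3). specialize (H4 v H1). unfold tv_le in *. lia.
Qed.

Lemma tv_inf_spec S : is_glb S (tv_inf S).
Proof. unfold tv_inf. apply epsilon_spec. apply glb_exists. Qed.

Lemma tv_sup_spec S : is_lub S (tv_sup S).
Proof. unfold tv_sup. apply epsilon_spec. apply lub_exists. Qed.

Lemma tneg_le a b : tv_le a b -> tv_le (tneg b) (tneg a).
Proof. destruct a, b; unfold tv_le; simpl; lia. Qed.

Lemma tneg_invol a : tneg (tneg a) = a.
Proof. destruct a; reflexivity. Qed.

Lemma glb_neg_lub (S1 S2 : tv -> Prop) :
  (forall w, S1 w <-> exists v, S2 v /\ w = tneg v) ->
  tv_inf S1 = tneg (tv_sup S2).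
Proof.
  intros Heq. apply (glb_unique S1); [apply tv_inf_spec|].
  destruct (tv_sup_spec S2) as [H1 H2]. split.
  - intros w Hw. apply Heq in Hw. destruct Hw as [v [Hv ->]].
    apply tneg_le. auto.
  - intros z Hz. rewrite <- (tneg_invol z). apply tneg_le.
    apply H2. intros w Hw. rewrite <- (tneg_invol w). apply tneg_le.
    apply Hz. apply Heq. eauto.
Qed.


Definition inr (o : option nat) (i : nat) : Prop :=
  match o with None => True | Some m => i <= m end.

Definition pfun {F : Type} (s : nat -> state F) (o : option nat) : play F :=
  match o with None => PInf s | Some m => PFin (map s (seq 0 (S m))) end.

Lemma inr_S o i : inr o (S i) -> inr o i.
Proof. destruct o; simpl; auto; lia. Qed.

Lemma inr_le o i j : j <= i -> inr o i -> inr o j.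
Proof. destruct o; simpl; auto; lia. Qed.

Lemma nth_error_map_seq {A} (s : nat -> A) m i :
  nth_error (map s (seq 0 (S m))) i = if Nat.leb i m then Some (s i) else None.
Proof.
  rewrite nth_error_map, nth_error_seq.
  destruct (Nat.ltb_spec i (S m)), (Nat.leb_spec i m); simpl; try lia; reflexivity.
Qed.

Lemma firstn_map_seq {A} (s : nat -> A) m i : i <= m ->
  firstn (S i) (map s (seq 0 (S m))) = map s (seq 0 (S i)).
Proof.
  intros H. rewrite firstn_map. f_equal.
  replace (S m) with (S i + (m - i)) by lia. rewrite seq_app.
  rewrite firstn_app. rewrite length_seq, Nat.sub_diag. simpl firstn at 2.
  rewrite app_nil_r. rewrite <- (length_seq (S i) 0) at 1. apply firstn_all.
Qed.

Lemma last_map_seq {A} (s : nat -> A) m d : last (map s (seq 0 (S m))) d = s m.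
Proof.
  rewrite seq_S, map_app. simpl. apply last_last.
Qed.

Lemma P_start {F} (s : nat -> state F) o s0 : starts_at s0 (pfun s o) <-> s 0 = s0.
Proof. destruct o as [m|]; cbn [pfun starts_at]; [simpl; split; congruence| tauto]. Qed.

Lemma last_opt_map_seq {A} (s : nat -> A) m : last_opt (map s (seq 0 (S m))) = Some (s m).
Proof.
  unfold last_opt. rewrite seq_S, map_app, rev_app_distr. reflexivity.
Qed.

Lemma P_fpath {FS : fact_space} (JF : jframe FS) s m :
  is_fpath JF (map s (seq 0 (S m))) <-> (forall i, S i <= m -> edge JF (s i) (s (S i))).
Proof.
  unfold is_fpath. split.
  - intros [_ H] i Hi. apply (H i); rewrite nth_error_map_seq;
      destruct (Nat.leb_spec i m), (Nat.leb_spec (S i) m); try lia; reflexivity.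
  - intros H. split; [simpl; discriminate|]. intros i a b Ha Hb.
    rewrite nth_error_map_seq in Ha, Hb.
    destruct (Nat.leb_spec (S i) m); [|discriminate].
    destruct (Nat.leb_spec i m); [|lia]. injection Ha; injection Hb; intros <- <-. auto.
Qed.

Lemma P_play {FS : fact_space} (JF : jframe FS) s o :
  is_play JF (pfun s o) <->
  (forall i, inr o (S i) -> edge JF (s i) (s (S i))) /\
  (forall m, o = Some m -> ~ has_out JF (s m)).
Proof.
  destruct o as [m|]; cbn [pfun is_play].
  - rewrite P_fpath. rewrite last_opt_map_seq. split.
    + intros [H1 H2]. split; auto. intros m' [= <-]. apply H2; auto.
    + intros [H1 H2]. split; auto. intros s' [= <-]. apply H2; auto.
  - simpl. split; [intros H; split; auto; discriminate| intros [H _]; auto].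
Qed.

Lemma P_cons {F} (rho : strat F) P s o :
  consistent rho P (pfun s o) <->
  (forall i, inr o (S i) -> owned P (s i) -> rho (map s (seq 0 (S i))) = s (S i)).
Proof.
  destruct o as [m|]; cbn [pfun consistent inr].
  - split.
    + intros H i Hi Ho. rewrite <- (firstn_map_seq s m i) by lia.
      apply (H i (s i) (s (S i))); auto; rewrite nth_error_map_seq;
        destruct (Nat.leb_spec i m), (Nat.leb_spec (S i) m); try lia; reflexivity.
    + intros H i a b Ha Hb Ho. rewrite nth_error_map_seq in Ha, Hb.
      destruct (Nat.leb_spec (S i) m); [|discriminate].
      destruct (Nat.leb_spec i m); [|lia]. injection Ha; injection Hb; intros <- <-.
      rewrite firstn_map_seq by lia. auto.
  - split; auto.
Qed.

Lemma nth_map_seq_self {A} (l : list A) d :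
  l = map (fun j => nth j l d) (seq 0 (length l)).
Proof.
  induction l as [|a l IH]; [reflexivity|]. simpl. f_equal.
  rewrite <- seq_shift, map_map. simpl. exact IH.
Qed.

Lemma play_repr {FS : fact_space} (JF : jframe FS) p :
  is_play JF p -> exists s o, p = pfun s o.
Proof.
  destruct p as [s|l].
  - intros _. exists s, None. reflexivity.
  - intros [[Hne _] _]. exists (fun j => nth j l (ST (emb Tt))), (Some (length l - 1)).
    cbn [pfun]. f_equal. replace (S (length l - 1)) with (length l).
    + apply nth_map_seq_self.
    + destruct l; [congruence|simpl; lia].
Qed.

Lemma pfun_eq {F} (s1 s2 : nat -> state F) o :
  (forall i, inr o i -> s1 i = s2 i) -> pfun s1 o = pfun s2 o.
Proof.
  intros H. destruct o as [m|]; cbn [pfun].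
  - f_equal. apply map_ext_in. intros j Hj. apply in_seq in Hj. apply H. simpl; lia.
  - f_equal. apply functional_extensionality. intros; apply H; exact I.
Qed.

Definition Spec {FS : fact_space} (JF : jframe FS) s0 (sigma tau : strat FS) p :=
  starts_at s0 p /\ is_play JF p /\ consistent sigma PT p /\ consistent tau PF p.

Lemma owned_cases {F} (a : state F) : owned PT a \/ owned PF a.
Proof. destruct a; simpl; auto. Qed.

Lemma play_unique {FS : fact_space} (JF : jframe FS) s0 sigma tau p1 p2 :
  Spec JF s0 sigma tau p1 -> Spec JF s0 sigma tau p2 -> p1 = p2.
Proof.
  intros H1 H2.
  assert (R1 := proj1 (proj2 H1)); assert (R2 := proj1 (proj2 H2)).
  apply play_repr in R1; apply play_repr in R2.
  destruct R1 as [s1 [o1 ->]]; destruct R2 as [s2 [o2 ->]].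
  destruct H1 as [A1 [B1 [C1 D1]]]; destruct H2 as [A2 [B2 [C2 D2]]].
  rewrite P_start in A1, A2. rewrite P_play in B1, B2.
  rewrite P_cons in C1, C2, D1, D2.
  destruct B1 as [E1 F1]; destruct B2 as [E2 F2].
  assert (Key : forall n, forall j, j <= n ->
     (inr o1 j <-> inr o2 j) /\ (inr o1 j -> s1 j = s2 j)).
  { induction n as [|n IH]; intros j Hj.
    - assert (j = 0) by lia; subst. destruct o1, o2; simpl; split; try split; intros; try lia; congruence.
    - destruct (Nat.leb_spec j n) as [Hjn|Hjn]; [apply IH; auto|].
      assert (j = S n) by lia; subst j.
      destruct (IH n (le_n n)) as [Hi Hs].
      assert (Hpre : inr o1 n -> map s1 (seq 0 (S n)) = map s2 (seq 0 (S n))).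
      { intros Hn. apply map_ext_in. intros j Hj'. apply in_seq in Hj'.
        destruct (IH j ltac:(lia)) as [_ Hs']. apply Hs'. apply (inr_le o1 n); auto; lia. }
      assert (Gen : forall (sa sb : nat -> state FS) oa ob,
        (forall i, inr oa (S i) -> edge JF (sa i) (sa (S i))) ->
        (forall m, ob = Some m -> ~ has_out JF (sb m)) ->
        inr oa (S n) -> inr oa n -> inr ob n -> sa n = sb n -> inr ob (S n)).
      { intros sa sb oa ob Ea Fb Ha Hna Hnb Hab. destruct ob as [mb|]; simpl; auto.
        simpl in Hnb. destruct (Nat.eq_dec n mb) as [<-|]; [|lia].
        exfalso. apply (Fb n eq_refl). rewrite <- Hab. exists (sa (S n)). auto. }
      split; [split|].
      + intros Ha. assert (Hn1 := inr_S _ _ Ha). assert (Hn2 := proj1 Hi Hn1).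
        apply (Gen s1 s2 o1 o2); auto.
      + intros Ha. assert (Hn2 := inr_S _ _ Ha). assert (Hn1 := proj2 Hi Hn2).
        apply (Gen s2 s1 o2 o1); auto. symmetry; auto.
      + intros Ha. assert (Hn1 := inr_S _ _ Ha). assert (Hn2 := proj1 Hi Hn1).
        assert (Hb : inr o2 (S n)).
        { apply (Gen s1 s2 o1 o2); auto. }
        destruct (owned_cases (s1 n)) as [Ho|Ho].
        * rewrite <- (C1 n Ha Ho), <- (C2 n Hb). rewrite Hpre; auto.
          rewrite <- Hs; auto.
        * rewrite <- (D1 n Ha Ho), <- (D2 n Hb). rewrite Hpre; auto.
          rewrite <- Hs; auto. }
  assert (Ho : o1 = o2).
  { destruct o1 as [m1|], o2 as [m2|]; auto.
    - destruct (Key (S (m1 + m2)) (S m1) ltac:(lia)) as [H _].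
      destruct (Key (S (m1 + m2)) (S m2) ltac:(lia)) as [H' _].
      simpl in H, H'. f_equal.
      assert (~ S m1 <= m2) by (intro HH; apply H in HH; lia).
      assert (~ S m2 <= m1) by (intro HH; apply H' in HH; lia).
      lia.
    - destruct (Key (S m1) (S m1) (le_n _)) as [H _]. simpl in H.
      destruct H as [_ HH]; specialize (HH I); lia.
    - destruct (Key (S m2) (S m2) (le_n _)) as [H _]. simpl in H.
      destruct H as [HH _]; specialize (HH I); lia. }
  subst o2. apply pfun_eq. intros i Hi. apply (Key i i (le_n _)); auto.
Qed.


Fixpoint Rrun {FS : fact_space} (s0 : state FS) (sigma tau : strat FS) (n : nat) : list (state FS) :=
  match n with
  | 0 => [s0]
  | S n => let p := Rrun s0 sigma tau n in
           p ++ [match last p (ST (emb Tt)) with ST _ => sigma p | SF _ _ => tau p end]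
  end.

Lemma play_exists {FS : fact_space} (JF : jframe FS) s0 sigma tau :
  valid_gen JF PT sigma -> valid_gen JF PF tau -> exists p, Spec JF s0 sigma tau p.
Proof.
  intros Vs Vt.
  set (R := Rrun s0 sigma tau).
  set (s := fun i => last (R i) (ST (emb Tt))).
  assert (HR : forall i, R i = map s (seq 0 (S i))).
  { induction i as [|i IH]; [reflexivity|].
    rewrite seq_S, map_app. simpl Nat.add. rewrite <- IH.
    unfold s, R. simpl map. cbn [Rrun]. rewrite last_last. reflexivity. }
  assert (Hnx : forall i, s (S i) = match s i with ST _ => sigma (R i) | SF _ _ => tau (R i) end).
  { intros i. unfold s at 1. unfold R. cbn [Rrun]. rewrite last_last. reflexivity. }
  assert (Hcons : forall i, (owned PT (s i) -> sigma (map s (seq 0 (S i))) = s (S i)) /\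
                            (owned PF (s i) -> tau (map s (seq 0 (S i))) = s (S i))).
  { intros i. rewrite Hnx, <- HR. destruct (s i); simpl; split; intros []; reflexivity. }
  assert (Good : forall n, (forall j, j < n -> has_out JF (s j)) ->
                 forall j, j < n -> edge JF (s j) (s (S j))).
  { induction n as [|n IH]; intros Hh j Hj; [lia|].
    destruct (Nat.eq_dec j n) as [->|Hne]; [|apply IH; auto; lia].
    assert (Hf : is_fpath JF (map s (seq 0 (S n)))).
    { apply P_fpath. intros i Hi. apply IH; auto; lia. }
    assert (Hl : last_opt (map s (seq 0 (S n))) = Some (s n)) by apply last_opt_map_seq.
    assert (Ho := Hh n ltac:(lia)).
    destruct (owned_cases (s n)) as [Ow|Ow].
    - rewrite <- (proj1 (Hcons n) Ow). apply Vs with (s := s n); auto.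
    - rewrite <- (proj2 (Hcons n) Ow). apply Vt with (s := s n); auto. }
  assert (Hstart : s 0 = s0) by reflexivity.
  destruct (classic (exists n, ~ has_out JF (s n))) as [[n Hn]|Hno].
  - assert (Hmin : exists m, ~ has_out JF (s m) /\ forall j, j < m -> has_out JF (s j)).
    { induction n as [n IH] using lt_wf_ind.
      destruct (classic (forall j, j < n -> has_out JF (s j))) as [Hall|Hnot].
      - exists n; auto.
      - apply not_all_ex_not in Hnot. destruct Hnot as [j Hj].
        apply imply_to_and in Hj. destruct Hj as [Hj1 Hj2]. apply (IH j); auto. }
    destruct Hmin as [m [Hm1 Hm2]].
    exists (pfun s (Some m)). unfold Spec.
    rewrite P_start, P_play, !P_cons. split; [auto|split; [split|split]].
    + intros i Hi. simpl in Hi. apply (Good m); auto; lia.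
    + intros m' [= <-]; auto.
    + intros i _; apply Hcons.
    + intros i _; apply Hcons.
  - exists (pfun s None). unfold Spec.
    rewrite P_start, P_play, !P_cons. split; [auto|split; [split|split]].
    + intros i _. apply (Good (S i)); [|lia]. intros j _.
      destruct (classic (has_out JF (s j))) as [|HH]; auto. exfalso; eauto.
    + discriminate.
    + intros i _; apply Hcons.
    + intros i _; apply Hcons.
Qed.

Lemma the_play_spec {FS : fact_space} (JF : jframe FS) x sigma tau :
  valid_gen JF PT sigma -> valid_gen JF PF tau ->
  Spec JF (ST x) sigma tau (the_play JF (ST x) sigma tau).
Proof.
  intros Vs Vt. unfold the_play. apply epsilon_spec. apply play_exists; auto.
Qed.

Lemma map_seq_inj {A} (s : nat -> A) i j :
  map s (seq 0 (S i)) = map s (seq 0 (S j)) -> i = j.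
Proof.
  intros H. apply (f_equal (@length A)) in H. rewrite !length_map, !length_seq in H. lia.
Qed.

Lemma follow {FS : fact_space} (JF : jframe FS) s o :
  is_play JF (pfun s o) ->
  exists sigma, valid_gen JF PT sigma /\ consistent sigma PT (pfun s o).
Proof.
  intros Hp. apply P_play in Hp. destruct Hp as [HE HF].
  set (Pq := fun (q : list (state FS)) t =>
     (exists i, inr o (S i) /\ q = map s (seq 0 (S i)) /\ t = s (S i)) \/
     ((~ exists i, inr o (S i) /\ q = map s (seq 0 (S i))) /\
      forall a, last_opt q = Some a -> has_out JF a -> edge JF a t)).
  assert (Hex : forall q, exists t, Pq q t).
  { intros q. destruct (classic (exists i, inr o (S i) /\ q = map s (seq 0 (S i)))) as [[i [Hi Hq]]|Hn].
    - exists (s (S i)). left. eauto.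
    - destruct (classic (exists a, last_opt q = Some a /\ has_out JF a)) as [[a [Ha [t Ht]]]|Hn2].
      + exists t. right. split; auto. intros a' Ha' _. rewrite Ha in Ha'. injection Ha'; intros <-; auto.
      + exists (ST (emb Tt)). right. split; auto. intros a Ha Ho. exfalso; eauto. }
  set (sigma := fun q => epsilon (inhabits (ST (emb Tt))) (Pq q)).
  assert (Hsig : forall q, Pq q (sigma q)).
  { intros q. unfold sigma. apply epsilon_spec. apply Hex. }
  exists sigma. split.
  - intros q a _ Hl _ Hout. destruct (Hsig q) as [[i [Hi [-> ->]]]|[_ H]]; auto.
    rewrite last_opt_map_seq in Hl. injection Hl; intros <-. auto.
  - apply P_cons. intros i Hi _. destruct (Hsig (map s (seq 0 (S i)))) as [[j [Hj [Hq ->]]]|[Hn _]].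
    + apply map_seq_inj in Hq. subst; auto.
    + exfalso. eauto.
Qed.

Definition PL {FS : fact_space} (JF : jframe FS) x (tau : strat FS) p :=
  starts_at (ST x) p /\ is_play JF p /\ consistent tau PF p.

Lemma game_sets {FS : fact_space} (JF : jframe FS) x tau {T} (f : play FS -> T) :
  valid_gen JF PF tau ->
  forall v, (exists sigma, valid_gen JF PT sigma /\ v = f (the_play JF (ST x) sigma tau)) <->
            (exists p, PL JF x tau p /\ v = f p).
Proof.
  intros Vt v. split.
  - intros [sigma [Vs ->]]. exists (the_play JF (ST x) sigma tau). split; auto.
    destruct (the_play_spec JF x sigma tau Vs Vt) as [A [B [C D]]]. split; auto.
  - intros [p [[A [B C]] ->]]. destruct (play_repr JF p B) as [s [o ->]].
    destruct (follow JF s o B) as [sigma [Vs Cs]]. exists sigma. split; auto.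
    f_equal. symmetry. apply (play_unique JF (ST x) sigma tau).
    + apply the_play_spec; auto.
    + repeat split; auto.
Qed.


Lemma out_Fd {FS : fact_space} (JF : jframe FS) a b : edge JF a b -> Fd JF (st_fact a).
Proof.
  destruct a as [y|y A], b as [z|z B']; simpl; try tauto.
  - intros [-> H]. eapply rule_head; eauto.
  - intros [H _]. eapply rule_head; eauto.
Qed.

Lemma PL_branch {FS : fact_space} (JF : jframe FS) x tau p :
  Fd JF x -> PL JF x tau p -> is_branch JF (b_of_play p).
Proof.
  intros Hx [A [B C]]. destruct (play_repr JF p B) as [s [o ->]].
  rewrite P_start in A. rewrite P_play in B. destruct B as [HE HF].
  destruct o as [m|]; cbn [pfun b_of_play is_branch].
  - assert (Hm : m <> 0).
    { intros ->. apply (HF 0 eq_refl). rewrite A.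
      destruct (rule_total Hx) as [R HR]. exists (SF x R). simpl. auto. }
    assert (Hlast : exists y, s m = ST y /\ ~ Fd JF y).
    { destruct (s m) as [y|y R] eqn:Hs.
      - exists y. split; auto. intros Hy. apply (HF m eq_refl). rewrite Hs.
        destruct (rule_total Hy) as [R HR]. exists (SF y R). simpl. auto.
      - exfalso. assert (He := HE (m - 1) ltac:(simpl; lia)).
        replace (S (m - 1)) with m in He by lia. rewrite Hs in He.
        destruct (s (m - 1)) as [y'|]; simpl in He; [|contradiction].
        destruct He as [_ Hr]. destruct (rule_nonempty Hr) as [z Hz].
        apply (HF m eq_refl). rewrite Hs. exists (ST z). simpl. auto. }
    destruct Hlast as [y [Hy1 Hy2]].
    exists (flat_map (fun s => match s with ST y => [y] | SF _ _ => [] end) (map s (seq 0 m))), y.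
    split; [|split; [|split]].
    + rewrite seq_S, map_app, flat_map_app. simpl. rewrite Hy1. reflexivity.
    + destruct m as [|m]; [lia|]. simpl. rewrite A. discriminate.
    + apply Forall_forall. intros z Hz. apply in_flat_map in Hz.
      destruct Hz as [a [Ha Hz]]. apply in_map_iff in Ha. destruct Ha as [j [<- Hj]].
      apply in_seq in Hj.
      assert (He := HE j ltac:(simpl; lia)). apply out_Fd in He.
      destruct (s j); simpl in Hz; [|contradiction]. destruct Hz as [<-|[]]. exact He.
    + exact Hy2.
  - intros k. apply (out_Fd JF _ (s (S (2 * k)))). apply HE. exact I.
Qed.

Lemma neg_val {FS : fact_space} (JF : jframe FS) (B : branch FS -> FS) Iv x tau p :
  consistent_be JF B -> is_interp Iv -> Fd JF x -> PL JF x tau p ->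
  Iv (B (neg_branch (b_of_play p))) = tneg (Iv (B (b_of_play p))).
Proof.
  intros Hc [Hi _] Hx Hp. rewrite Hc; [apply Hi|]. eapply PL_branch; eauto.
Qed.


Fixpoint chain {A} (R : A -> A -> Prop) (l : list A) : Prop :=
  match l with
  | a :: ((b :: _) as t) => R a b /\ chain R t
  | _ => True
  end.

Lemma chain_map_seq {A} (R : A -> A -> Prop) (a : nat -> A) n k :
  (forall j, k <= j -> j < k + n -> R (a j) (a (S j))) -> chain R (map a (seq k (S n))).
Proof.
  revert k; induction n as [|n IH]; intros k H; [simpl; auto|].
  change (chain R (a k :: map a (seq (S k) (S n)))).
  assert (HC := IH (S k) ltac:(intros j H1 H2; apply H; lia)).
  simpl in HC |- *. split; auto. apply H; lia.
Qed.

Lemma chain_app_last {A} (R : A -> A -> Prop) l b d :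
  chain R l -> l <> [] -> R (last l d) b -> chain R (l ++ [b]).
Proof.
  induction l as [|a l IH]; [congruence|]. intros Hc _ Hr.
  destruct l as [|a' l].
  - simpl in *. auto.
  - simpl in Hc. destruct Hc as [H1 H2]. change (R a a' /\ chain R ((a' :: l) ++ [b])).
    split; auto. apply IH; auto; discriminate.
Qed.

Lemma chain_nth {A} (R : A -> A -> Prop) l :
  chain R l -> forall i a b, nth_error l i = Some a -> nth_error l (S i) = Some b -> R a b.
Proof.
  induction l as [|a0 l IH]; intros Hc i a b Ha Hb; [destruct i; discriminate|].
  destruct l as [|a1 l]; [destruct i as [|[|]]; discriminate|].
  destruct Hc as [H1 H2]. destruct i as [|i].
  - simpl in Ha, Hb. injection Ha; injection Hb; intros <- <-; auto.
  - apply (IH H2 i); auto.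
Qed.

Lemma chain_map {A B} (R : A -> A -> Prop) (R' : B -> B -> Prop) (f : A -> B) l :
  (forall a b, R a b -> R' (f a) (f b)) -> chain R l -> chain R' (map f l).
Proof.
  intros HR. induction l as [|a l IH]; [simpl; auto|].
  destruct l as [|b l]; [simpl; auto|]. intros [H1 H2]. simpl. split; auto.
  apply IH; auto.
Qed.


Lemma last_map_gen {A B} (f : A -> B) l d : last (map f l) (f d) = f (last l d).
Proof.
  induction l as [|a l IH]; [reflexivity|]. destruct l as [|b l]; [reflexivity|].
  change (last (f a :: f b :: map f l) (f d) = f (last (a :: b :: l) d)).
  change (last (f b :: map f l) (f d) = f (last (b :: l) d)). exact IH.
Qed.

Lemma div2_double k : Nat.div2 (2 * k) = k.
Proof. induction k as [|k IH]; [reflexivity|]. replace (2 * S k) with (S (S (2 * k))) by lia. change (S (Nat.div2 (2 * k)) = S k). rewrite IH; reflexivity. Qed.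
Lemma div2_double1 k : Nat.div2 (S (2 * k)) = k.
Proof. induction k as [|k IH]; [reflexivity|]. replace (S (2 * S k)) with (S (S (S (2 * k)))) by lia. change (S (Nat.div2 (S (2 * k))) = S k). f_equal. exact IH. Qed.
Lemma even_double k : Nat.even (2 * k) = true.
Proof. apply Nat.even_even. Qed.
Lemma even_double1 k : Nat.even (S (2 * k)) = false.
Proof. replace (S (2*k)) with (2*k+1) by lia. apply Nat.even_odd. Qed.

Lemma parity j : exists k, j = 2 * k \/ j = S (2 * k).
Proof.
  destruct (Nat.Even_or_Odd j) as [[k Hk]|[k Hk]]; exists k; lia.
Qed.

Definition STf {F} := fun s : state F => match s with ST y => [y] | SF _ _ => [] end.

Lemma FM {F} (s : nat -> state F) K :
  (forall k, k <= K -> is_T (s (2 * k))) -> (forall k, k < K -> ~ is_T (s (S (2 * k)))) ->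
  flat_map STf (map s (seq 0 (S (2 * K)))) = map (fun k => st_fact (s (2 * k))) (seq 0 (S K)).
Proof.
  induction K as [|K IH]; intros H1 H2.
  - simpl. assert (HT := H1 0 (le_n 0)). simpl in HT. destruct (s 0); simpl; [reflexivity|contradiction].
  - replace (S (2 * S K)) with (S (2 * K) + 2) by lia.
    rewrite seq_app, map_app, flat_map_app, IH by (intros; try apply H1; try apply H2; lia).
    rewrite (seq_S (S K)), map_app. f_equal.
    change (STf (s (S (2*K))) ++ STf (s (S (S (2*K)))) ++ [] = [st_fact (s (2 * S K))]).
    assert (HA := H2 K ltac:(lia)). assert (HB := H1 (S K) ltac:(lia)).
    replace (2 * S K) with (S (S (2 * K))) in * by lia.
    destruct (s (S (2 * K))); simpl in HA; [contradiction|].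
    destruct (s (S (S (2 * K)))); simpl in HB; [|contradiction].
    reflexivity.
Qed.

Lemma edge_TT {FS : fact_space} (JF : jframe FS) a b : is_T a -> is_T b -> ~ edge JF a b.
Proof. destruct a, b; simpl; tauto. Qed.

Lemma edge_alt {FS : fact_space} (JF : jframe FS) a b : edge JF a b -> (is_T a <-> ~ is_T b).
Proof. destruct a, b; simpl; tauto. Qed.

Lemma alternation {FS : fact_space} (JF : jframe FS) (s : nat -> state FS) o x :
  s 0 = ST x -> (forall i, inr o (S i) -> edge JF (s i) (s (S i))) ->
  forall k, (inr o (2 * k) -> is_T (s (2 * k))) /\ (inr o (S (2 * k)) -> ~ is_T (s (S (2 * k)))).
Proof.
  intros H0 HE. induction k as [|k [IH1 IH2]].
  - split; intros Hi; simpl; [rewrite H0; exact I|].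
    apply (edge_alt JF (s 0)); [apply HE; auto|]. rewrite H0; exact I.
  - assert (E1 : inr o (2 * S k) -> is_T (s (2 * S k))).
    { intros Hi. replace (2 * S k) with (S (S (2 * k))) in *  by lia.
      assert (He := HE (S (2 * k)) Hi). apply edge_alt in He.
      destruct (classic (is_T (s (S (S (2 * k)))))) as [|HH]; auto. exfalso.
      apply IH2; [apply inr_S; auto|]. apply He. auto. }
    split; auto. intros Hi. replace (S (2 * S k)) with (S (2 * S k)) by lia.
    assert (He := HE (2 * S k) Hi). apply edge_alt in He. apply He. apply E1. apply inr_S; auto.
Qed.


Definition path_from {N} (E : N -> N -> Prop) (r : N) ps := hd_error ps = Some r /\ chain E ps.

Definition GenHyp {FS : fact_space} (JF : jframe FS) {N} (E : N -> N -> Prop)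
  (lab : N -> state FS) (r : N) (x : FS) (tau : strat FS) : Prop :=
  lab r = ST x /\ (forall a b, E a b -> edge JF (lab a) (lab b)) /\
  (forall ps b, path_from E r ps -> E (last ps r) b -> owned PF (lab (last ps r)) ->
     tau (map lab ps) = lab b) /\
  (forall ps t, path_from E r ps -> edge JF (lab (last ps r)) t ->
     (owned PF (lab (last ps r)) -> tau (map lab ps) = t) ->
     exists b, E (last ps r) b /\ lab b = t) /\
  valid_gen JF PF tau.

Definition kk {F} {N} (E : N -> N -> Prop) (lab : N -> state F)
  (n m : {n : N | is_T (lab n)}) : N :=
  epsilon (inhabits (proj1_sig n))
    (fun k => ~ is_T (lab k) /\ E (proj1_sig n) k /\ E k (proj1_sig m)).

Lemma kk_spec {FS : fact_space} (JF : jframe FS) {N} (E : N -> N -> Prop) lab n m :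
  (forall a b, E a b -> edge JF (lab a) (lab b)) ->
  jedge (filter_neg E lab) n m ->
  ~ is_T (lab (kk E lab n m)) /\ E (proj1_sig n) (kk E lab n m) /\ E (kk E lab n m) (proj1_sig m).
Proof.
  intros HE [H|H].
  - exfalso. apply HE in H. revert H. apply edge_TT; [apply (proj2_sig n)|apply (proj2_sig m)].
  - unfold kk. apply epsilon_spec. exact H.
Qed.

Definition il {F} {N} (E : N -> N -> Prop) (lab : N -> state F)
  (f : nat -> {n : N | is_T (lab n)}) (j : nat) : N :=
  if Nat.even j then proj1_sig (f (Nat.div2 j)) else kk E lab (f (Nat.div2 j)) (f (S (Nat.div2 j))).

Lemma il_even {F N} E (lab : N -> state F) f k : il E lab f (2 * k) = proj1_sig (f k).
Proof. unfold il. rewrite even_double, div2_double. reflexivity. Qed.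
Lemma il_odd {F N} E (lab : N -> state F) f k : il E lab f (S (2 * k)) = kk E lab (f k) (f (S k)).
Proof. unfold il. rewrite even_double1, div2_double1. reflexivity. Qed.

Lemma chain_fpath {FS : fact_space} (JF : jframe FS) l : chain (edge JF) l -> l <> [] -> is_fpath JF l.
Proof. intros Hc Hn. split; auto. intros i a b Ha Hb. eapply chain_nth; eauto. Qed.

Lemma T_not_PF {F} (a : state F) : is_T a -> owned PF a -> False.
Proof. destruct a; simpl; tauto. Qed.

Lemma dir1_core {FS : fact_space} (JF : jframe FS) {N} (E : N -> N -> Prop) lab r x tau
  (f : nat -> {n : N | is_T (lab n)}) (o' : option nat) :
  GenHyp JF E lab r x tau ->
  proj1_sig (f 0) = r ->
  (forall k, inr o' (S k) -> jedge (filter_neg E lab) (f k) (f (S k))) ->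
  (forall K, o' = Some K -> forall m', ~ jedge (filter_neg E lab) (f K) m') ->
  PL JF x tau (pfun (fun j => lab (il E lab f j)) (option_map (fun K => 2 * K) o')).
Proof.
  intros [Hr [HE [G1 [G2 Vt]]]] Hf0 Hedge Hend.
  set (a := il E lab f). set (s := fun j => lab (a j)).
  set (o2 := option_map (fun K => 2 * K) o').
  assert (HEa : forall j, inr o2 (S j) -> E (a j) (a (S j))).
  { intros j Hj. destruct (parity j) as [k [->| ->]].
    - assert (Hk : inr o' (S k)) by (destruct o'; simpl in *; auto; lia).
      unfold a. rewrite il_even, il_odd. apply (kk_spec JF); auto.
    - assert (Hk : inr o' (S k)) by (destruct o'; simpl in *; auto; lia).
      unfold a. rewrite il_odd. replace (S (S (2 * k))) with (2 * S k) by lia.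
      rewrite il_even. apply (kk_spec JF); auto. }
  assert (Ha0 : a 0 = r) by (unfold a; rewrite <- Hf0; apply (il_even E lab f 0)).
  assert (Hps : forall i, inr o2 i -> path_from E r (map a (seq 0 (S i)))).
  { intros i Hi. split; [simpl; rewrite Ha0; reflexivity|].
    apply chain_map_seq. intros j _ Hj. apply HEa. apply (inr_le o2 i); auto; lia. }
  split; [|split].
  - apply P_start. unfold s. rewrite Ha0. exact Hr.
  - apply P_play. split.
    + intros i Hi. apply HE. apply HEa; auto.
    + intros m Hm Hout. destruct o' as [K|]; [|discriminate]. simpl in Hm.
      injection Hm; intros <-. clear Hm.
      destruct Hout as [t Ht].
      set (ps := map a (seq 0 (S (2 * K)))).
      assert (Hp : path_from E r ps) by (apply Hps; simpl; lia).
      assert (Hl : last ps r = proj1_sig (f K)) by (unfold ps; rewrite last_map_seq; apply il_even).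
      assert (HTK : is_T (lab (proj1_sig (f K)))) by apply (proj2_sig (f K)).
      change (edge JF (lab (a (2*K))) t) in Ht. assert (Ha2K : a (2*K) = proj1_sig (f K)) by apply il_even. rewrite Ha2K in Ht.
      destruct (G2 ps t Hp) as [b1 [Hb1 Hlb1]].
      { rewrite Hl. exact Ht. }
      { rewrite Hl. intros HH; exfalso; eapply T_not_PF; eauto. }
      rewrite Hl in Hb1.
      destruct (lab (proj1_sig (f K))) as [y|] eqn:Hy; [|contradiction].
      destruct t as [|y' A]; [simpl in Ht; contradiction|].
      destruct Ht as [<- HA].
      destruct (rule_nonempty HA) as [z Hz].
      assert (Hc1 : chain E (ps ++ [b1])).
      { apply (chain_app_last E ps b1 r); [apply Hp| unfold ps; simpl; discriminate| rewrite Hl; auto]. }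
      assert (Hp1 : path_from E r (ps ++ [b1])).
      { split; auto. destruct Hp as [Hh _]. destruct ps; [discriminate|exact Hh]. }
      set (t' := tau (map lab (ps ++ [b1]))).
      assert (Het : edge JF (SF y A) t').
      { apply (Vt (map lab (ps ++ [b1])) (SF y A)).
        - apply chain_fpath; [apply (chain_map E); auto|].
          rewrite map_app; intros HH; apply app_eq_nil in HH; destruct HH as [_ HH]; discriminate.
        - unfold last_opt. rewrite map_app, rev_app_distr. simpl. rewrite Hlb1. reflexivity.
        - exact I.
        - exists (ST z). simpl; auto. }
      destruct (G2 (ps ++ [b1]) t' Hp1) as [c [Hc Hlc]].
      { rewrite last_last, Hlb1. exact Het. }
      { intros _. reflexivity. }
      rewrite last_last in Hc.
      assert (HTc : is_T (lab c)).
      { rewrite Hlc. destruct t'; simpl in Het |- *; auto. }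
      apply (Hend K eq_refl (exist _ c HTc)). right. exists b1. split; [|split; auto].
      rewrite Hlb1. simpl; auto.
  - apply P_cons. intros i Hi Ho.
    assert (Hp := Hps i (inr_S _ _ Hi)).
    unfold s. rewrite <- map_map.
    assert (Hl : last (map a (seq 0 (S i))) r = a i) by apply last_map_seq.
    apply G1; auto; rewrite Hl; auto.
Qed.

Lemma dir1 {FS : fact_space} (JF : jframe FS) {N} (E : N -> N -> Prop) lab r x tau
  (Hrt : is_T (lab r)) b :
  GenHyp JF E lab r x tau ->
  in_BJ (filter_neg E lab) (exist _ r Hrt) b ->
  exists p, PL JF x tau p /\ b = neg_branch (b_of_play p).
Proof.
  intros HG. assert (HE := proj1 (proj2 HG)).
  destruct b as [g|l]; cbn [in_BJ].
  - intros [f [Hf0 [Hed Hlab]]].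
    eexists. split.
    + apply (dir1_core JF E lab r x tau f None HG).
      * rewrite Hf0; reflexivity.
      * intros k _; auto.
      * discriminate.
    + simpl. f_equal. apply functional_extensionality. intros k.
      replace (k + (k + 0)) with (2 * k) by lia. rewrite Hlab, il_even. reflexivity.
  - intros [ns [Hhd [Hed [Hlast ->]]]].
    destruct ns as [|n0 ns']; [discriminate|].
    set (ns := n0 :: ns') in *.
    set (K := length ns'). set (f := fun k => nth k ns (exist _ r Hrt)).
    assert (HnK : forall k, k <= K -> nth_error ns k = Some (f k)).
    { intros k Hk. apply nth_error_nth'. change (k < S K). lia. }
    assert (Hed' : forall k, inr (Some K) (S k) -> jedge (filter_neg E lab) (f k) (f (S k))).
    { intros k Hk. simpl in Hk. apply (Hed k); apply HnK; lia. }
    assert (Hlo : last_opt ns = Some (f K)).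
    { unfold last_opt. rewrite (nth_map_seq_self ns (exist _ r Hrt)).
      replace (length ns) with (S K) by reflexivity. rewrite <- map_rev. 
      rewrite seq_S, rev_app_distr. reflexivity. }
    eexists. split.
    + apply (dir1_core JF E lab r x tau f (Some K) HG).
      * simpl in Hhd. injection Hhd; intros ->. reflexivity.
      * exact Hed'.
      * intros K' [= <-]. apply Hlast. exact Hlo.
    + cbn [option_map pfun b_of_play neg_branch]. f_equal.
      change (flat_map (fun s => match s with ST y => [y] | SF _ _ => [] end))
        with (flat_map (@STf FS)).
      rewrite FM.
      * rewrite map_map. rewrite (nth_map_seq_self ns (exist _ r Hrt)) at 1.
        rewrite map_map. apply map_ext. intros k. rewrite il_even. reflexivity.
      * intros k _. rewrite il_even. apply (proj2_sig (f k)).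
      * intros k Hk. rewrite il_odd. apply (kk_spec JF); auto; apply Hed'; simpl; lia.
Qed.

Fixpoint Aseq {F} {N} (E : N -> N -> Prop) (lab : N -> state F) (r : N)
  (s : nat -> state F) (i : nat) : list N :=
  match i with
  | 0 => [r]
  | S i => let q := Aseq E lab r s i in
      q ++ [epsilon (inhabits r) (fun b => E (last q r) b /\ lab b = s (S i))]
  end.

Definition gn {F} {N} (lab : N -> state F) (r : N) (Hrt : is_T (lab r)) (n : N)
  : {n : N | is_T (lab n)} :=
  match excluded_middle_informative (is_T (lab n)) with
  | left H => exist _ n H
  | right _ => exist _ r Hrt
  end.

Lemma gn_proj {F N} (lab : N -> state F) r Hrt n : is_T (lab n) -> proj1_sig (gn lab r Hrt n) = n.
Proof. intros H. unfold gn. destruct (excluded_middle_informative _); [reflexivity|contradiction]. Qed.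

Lemma gn_r {F N} (lab : N -> state F) r Hrt : gn lab r Hrt r = exist _ r Hrt.
Proof. unfold gn. destruct (excluded_middle_informative _); [|reflexivity].
  f_equal. apply proof_irrelevance. Qed.

Lemma dir2 {FS : fact_space} (JF : jframe FS) {N} (E : N -> N -> Prop) lab r x tau
  (Hrt : is_T (lab r)) p :
  GenHyp JF E lab r x tau -> PL JF x tau p ->
  in_BJ (filter_neg E lab) (exist _ r Hrt) (neg_branch (b_of_play p)).
Proof.
  intros [Hr [HE [G1 [G2 Vt]]]] [A [B C]].
  destruct (play_repr JF p B) as [s [o ->]].
  rewrite P_start in A. rewrite P_play in B. destruct B as [HEs HF].
  rewrite P_cons in C.
  set (As := Aseq E lab r s).
  assert (Inv : forall i, inr o i -> path_from E r (As i) /\ map lab (As i) = map s (seq 0 (S i))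
     /\ (inr o (S i) -> E (last (As i) r) (last (As (S i)) r))).
  { induction i as [|i IH]; intros Hi.
    - assert (P0 : path_from E r (As 0)) by (split; simpl; auto).
      split; [exact P0|split; [simpl; rewrite Hr, A; reflexivity|]].
      intros Hi1. unfold As. cbn [Aseq]. rewrite last_last.
      set (P := fun b => E (last [r] r) b /\ lab b = s 1).
      assert (HP : P (epsilon (inhabits r) P)).
      { apply epsilon_spec. apply (G2 [r] (s 1) P0).
        - simpl. rewrite Hr, <- A. apply HEs; auto.
        - simpl. intros Ho. exfalso. rewrite Hr in Ho. exact Ho. }
      apply HP.
    - destruct (IH (inr_S _ _ Hi)) as [Hp [Hm He]].
      assert (Hlast : lab (last (As i) r) = s i).
      { rewrite <- last_map_gen, Hm. apply last_map_seq. }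
      set (P := fun b => E (last (As i) r) b /\ lab b = s (S i)).
      assert (HP : P (epsilon (inhabits r) P)).
      { apply epsilon_spec. apply (G2 (As i) (s (S i)) Hp).
        - rewrite Hlast. apply HEs; auto.
        - rewrite Hlast. intros Ho. rewrite Hm. apply (C i Hi Ho). }
      assert (HAS : As (S i) = As i ++ [epsilon (inhabits r) P]) by reflexivity.
      assert (Hp' : path_from E r (As (S i))).
      { rewrite HAS. split.
        - destruct Hp as [Hh _]. destruct (As i); [discriminate|exact Hh].
        - apply (chain_app_last E (As i) _ r); [apply Hp| |apply HP].
          destruct Hp as [Hh _]. destruct (As i); discriminate. }
      split; [exact Hp'|split].
      + rewrite HAS, map_app, Hm, (seq_S (S i)), map_app. simpl. rewrite (proj2 HP). reflexivity.
      + intros Hi2. destruct (IH (inr_S _ _ Hi)) as [_ [_ _]].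
        assert (Hlast' : lab (last (As (S i)) r) = s (S i)).
        { rewrite HAS, last_last. apply HP. }
        set (P' := fun b => E (last (As (S i)) r) b /\ lab b = s (S (S i))).
        assert (HP' : P' (epsilon (inhabits r) P')).
        { apply epsilon_spec. apply (G2 (As (S i)) (s (S (S i))) Hp').
          - rewrite Hlast'. apply HEs; auto.
          - rewrite Hlast'. intros Ho.
            assert (Hm' : map lab (As (S i)) = map s (seq 0 (S (S i)))).
            { rewrite HAS, map_app, Hm, (seq_S (S i)), map_app. simpl. rewrite (proj2 HP). reflexivity. }
            rewrite Hm'. apply (C (S i) Hi2 Ho). }
        change (E (last (As (S i)) r) (last (As (S i) ++ [epsilon (inhabits r) P']) r)).
        rewrite last_last. apply HP'. }
  set (a := fun i => last (As i) r).
  assert (Hla : forall i, inr o i -> lab (a i) = s i).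
  { intros i Hi. destruct (Inv i Hi) as [_ [Hm _]]. unfold a.
    rewrite <- last_map_gen, Hm. apply last_map_seq. }
  assert (HEa : forall i, inr o (S i) -> E (a i) (a (S i))).
  { intros i Hi. apply (Inv i (inr_S _ _ Hi)); auto. }
  assert (Ha0 : a 0 = r) by reflexivity.
  assert (Alt := alternation JF s o x A HEs).
  set (f := fun k => gn lab r Hrt (a (2 * k))).
  assert (Hfp : forall k, inr o (2 * k) -> proj1_sig (f k) = a (2 * k)).
  { intros k Hk. unfold f. apply gn_proj. rewrite Hla by auto. apply Alt; auto. }
  assert (Hf0 : f 0 = exist _ r Hrt) by (unfold f; simpl; apply gn_r).
  assert (Hfe : forall k, inr o (2 * S k) -> jedge (filter_neg E lab) (f k) (f (S k))).
  { intros k Hk. right. exists (a (S (2 * k))).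
    assert (Hk1 : inr o (S (2 * k))) by (apply (inr_le o (2 * S k)); auto; lia).
    assert (Hk0 : inr o (2 * k)) by (apply inr_S; auto).
    split; [rewrite Hla by auto; apply Alt; auto|split].
    - rewrite Hfp by auto. apply HEa; auto.
    - rewrite Hfp by auto. replace (2 * S k) with (S (S (2 * k))) by lia. apply HEa.
      replace (S (S (2 * k))) with (2 * S k) by lia. auto. }
  assert (Hlab : forall k, inr o (2 * k) -> jlab (filter_neg E lab) (f k) = fneg (st_fact (s (2 * k)))).
  { intros k Hk. simpl. rewrite Hfp, Hla by auto. reflexivity. }
  destruct o as [m|]; cbn [pfun b_of_play neg_branch in_BJ].
  -
    assert (HTm : is_T (s m)).
    { destruct (s m) as [y|y R] eqn:Hs; simpl; auto.
      destruct m as [|m']; [rewrite A in Hs; discriminate|].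
      assert (He := HEs m' (le_n _)). rewrite Hs in He.
      destruct (s m') as [y'|]; simpl in He; [|contradiction].
      destruct He as [_ Hr']. destruct (rule_nonempty Hr') as [z Hz].
      apply (HF (S m') eq_refl). rewrite Hs. exists (ST z). simpl; auto. }
    destruct (parity m) as [K [->| ->]].
    2:{ exfalso. apply (proj2 (Alt K)); simpl; auto. }
    exists (map f (seq 0 (S K))). split; [|split; [|split]].
    + simpl. rewrite Hf0. reflexivity.
    + intros i m1 m2 H1 H2. rewrite nth_error_map_seq in H1, H2.
      destruct (Nat.leb_spec (S i) K); [|discriminate].
      destruct (Nat.leb_spec i K); [|lia].
      injection H1; injection H2; intros <- <-. apply Hfe. simpl; lia.
    + intros m1 Hm1 m2 Hj. rewrite last_opt_map_seq in Hm1. injection Hm1; intros <-.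
      apply (HF (2 * K) eq_refl).
      assert (Hk : inr (Some (2 * K)) (2 * K)) by (simpl; lia).
      rewrite <- (Hla _ Hk), <- (Hfp K Hk).
      destruct Hj as [Hj|[k0 [_ [Hj _]]]]; eexists; apply HE; eauto.
    + rewrite map_map.
      change (flat_map (fun s => match s with ST y => [y] | SF _ _ => [] end))
        with (flat_map (@STf FS)).
      rewrite FM, map_map.
      * apply map_ext_in. intros k Hk. apply in_seq in Hk. rewrite Hlab; auto. simpl; lia.
      * intros k Hk. apply Alt. simpl; lia.
      * intros k Hk. apply Alt. simpl; lia.
  - exists f. split; [exact Hf0|split].
    + intros i. apply Hfe. exact I.
    + intros i. rewrite Hlab; [reflexivity|exact I].
Qed.


Lemma gen_val {FS : fact_space} (JF : jframe FS) {N} (E : N -> N -> Prop) lab r x tau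
  (B : branch FS -> FS) Iv (Hrt : is_T (lab r)) :
  GenHyp JF E lab r x tau -> Fd JF x -> consistent_be JF B -> is_interp Iv ->
  val (J := filter_neg E lab) (exist _ r Hrt) B Iv =
  tneg (tv_sup (fun v => exists sigma : strat FS,
             valid_gen JF PT sigma /\ v = u JF B Iv x sigma tau)).
Proof.
  intros HG Hx Hc Hi. unfold val. apply glb_neg_lub. intros w.
  assert (Vt : valid_gen JF PF tau) by apply HG.
  assert (GS := game_sets JF x tau (fun p => Iv (B (b_of_play p))) Vt).
  unfold u. split.
  - intros [b [Hb ->]]. destruct (dir1 JF E lab r x tau Hrt b HG Hb) as [p [Hp ->]].
    exists (Iv (B (b_of_play p))). split.
    + apply GS. eauto.
    + eapply neg_val; eauto.
  - intros [v [Hv ->]]. apply GS in Hv. destruct Hv as [p [Hp ->]].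
    exists (neg_branch (b_of_play p)). split.
    + apply (dir2 JF E lab r x tau Hrt p HG Hp).
    + symmetry. eapply neg_val; eauto.
Qed.

Lemma last_map_ne {A B} (f : A -> B) l d d' : l <> [] -> last (map f l) d = f (last l d').
Proof.
  induction l as [|a l IH]; [congruence|]. intros _. destruct l as [|b l]; [reflexivity|].
  change (last (f b :: map f l) d = f (last (b :: l) d')). apply IH. discriminate.
Qed.


Lemma last_opt_last {A} (l : list A) s d : last_opt l = Some s -> last l d = s.
Proof.
  intros H. destruct l as [|a l]; [discriminate|].
  destruct (exists_last (l := a :: l) ltac:(discriminate)) as [l' [z Hz]].
  rewrite Hz in H |- *. unfold last_opt in H. rewrite rev_app_distr in H. simpl in H.
  injection H; intros <-. apply last_last.
Qed.

Lemma pos_hyp {FS : fact_space} (JF : jframe FS) (tau : pstrat FS) x :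
  valid_pos JF PF tau ->
  GenHyp JF (fun a b : {s : state FS | reach_pos JF tau x s} =>
                edge JF (proj1_sig a) (proj1_sig b) /\
                (owned PF (proj1_sig a) -> proj1_sig b = tau (proj1_sig a)))
            (fun a => proj1_sig a) (exist _ (ST x) (rp_refl JF tau x)) x (gen_of_pos tau).
Proof.
  intros Vt. split; [reflexivity|split; [|split; [|split]]].
  - intros a b [H _]; exact H.
  - intros ps b [Hh _] [_ Hb] Ho. unfold gen_of_pos.
    rewrite (last_map_ne _ _ _ (exist _ (ST x) (rp_refl JF tau x))).
    + symmetry; auto.
    + destruct ps; discriminate.
  - intros ps t [Hh _] He Ho.
    unfold gen_of_pos in Ho.
    rewrite (last_map_ne _ _ _ (exist _ (ST x) (rp_refl JF tau x))) in Ho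
      by (destruct ps; discriminate).
    set (a := last ps (exist _ (ST x) (rp_refl JF tau x))) in *.
    assert (Ho' : owned PF (proj1_sig a) -> t = tau (proj1_sig a)) by (intros HH; symmetry; auto).
    exists (exist _ t (rp_step (proj2_sig a) He Ho')). simpl. auto.
  - intros p s Hp Hl Ho Hout. unfold gen_of_pos.
    rewrite (last_opt_last p s (ST (emb Tt)) Hl). apply Vt; auto.
Qed.

Lemma snoc_facts {A} (q : list A) t d : q <> [] ->
  nth_error (q ++ [t]) (pred (length q)) = Some (last q d) /\
  nth_error (q ++ [t]) (length q) = Some t /\
  firstn (S (pred (length q))) (q ++ [t]) = q.
Proof.
  intros Hq. destruct (exists_last Hq) as [l [a ->]].
  rewrite length_app, last_last. replace (length l + length [a]) with (S (length l)) by (simpl; lia).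
  cbn [pred]. rewrite <- app_assoc. split; [|split].
  - rewrite nth_error_app2, Nat.sub_diag by lia. reflexivity.
  - rewrite nth_error_app2 by lia. replace (S (length l) - length l) with 1 by lia. reflexivity.
  - replace (S (length l)) with (length l + 1) by lia. rewrite firstn_app_2. reflexivity.
Qed.

Lemma gen_hyp {FS : fact_space} (JF : jframe FS) (tau : strat FS) x :
  valid_gen JF PF tau ->
  GenHyp JF (fun a b : {p : list (state FS) | tree_node JF tau x p} =>
               exists s, proj1_sig b = proj1_sig a ++ [s])
            (fun a => last (proj1_sig a) (ST x))
            (exist _ [ST x] (tree_root JF tau x)) x tau.
Proof.
  intros Vt.
  set (N := {p : list (state FS) | tree_node JF tau x p}).
  set (E := fun a b : N => exists s, proj1_sig b = proj1_sig a ++ [s]).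
  set (lab := fun a : N => last (proj1_sig a) (ST x)).
  set (r := exist (fun p => tree_node JF tau x p) [ST x] (tree_root JF tau x) : N).
  assert (Hne : forall a : N, proj1_sig a <> []).
  { intros a. destruct (proj2_sig a) as [[Hp _] _]. exact Hp. }
  assert (Inv : forall ps (a0 : N) d, chain E (a0 :: ps) ->
      proj1_sig (last (a0 :: ps) d) = proj1_sig a0 ++ map lab ps).
  { induction ps as [|a1 ps IH]; intros a0 d Hc.
    - simpl. rewrite app_nil_r. reflexivity.
    - destruct Hc as [[s1 Hs1] Hc].
      change (proj1_sig (last (a1 :: ps) d) = proj1_sig a0 ++ lab a1 :: map lab ps).
      rewrite IH by exact Hc. rewrite Hs1. unfold lab. rewrite Hs1, last_last, <- app_assoc.
      reflexivity. }
  assert (Inv' : forall ps, path_from E r ps -> proj1_sig (last ps r) = map lab ps).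
  { intros ps [Hh Hc]. destruct ps as [|a0 ps]; [discriminate|]. simpl in Hh.
    injection Hh; intros ->. rewrite Inv by exact Hc. reflexivity. }
  assert (Hlab : forall ps, path_from E r ps -> lab (last ps r) = last (map lab ps) (ST x)).
  { intros ps Hp. unfold lab at 1. rewrite Inv' by exact Hp. reflexivity. }
  assert (Hmne : forall ps, path_from E r ps -> map lab ps <> []).
  { intros ps [Hh _]. destruct ps; [discriminate|simpl; discriminate]. }
  split; [reflexivity|split; [|split; [|split]]].
  - intros a b [s Hs]. unfold lab. rewrite Hs, last_last.
    destruct (proj2_sig b) as [[_ Hf] _]. rewrite Hs in Hf.
    destruct (snoc_facts (proj1_sig a) s (ST x) (Hne a)) as [H1 [H2 _]].
    eapply Hf. exact H1. replace (S (pred (length (proj1_sig a)))) with (length (proj1_sig a)).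
    exact H2. destruct (proj1_sig a) eqn:HH; [destruct (Hne a HH)|simpl; lia].
  - intros ps b Hp [sb Hsb] Ho. fold E lab r in Hp |- *.
    rewrite Inv' in Hsb by exact Hp.
    assert (Hlb : lab b = sb) by (unfold lab; rewrite Hsb; apply last_last).
    rewrite Hlb. destruct (proj2_sig b) as [_ [_ Hcons]]. rewrite Hsb in Hcons.
    destruct (snoc_facts (map lab ps) sb (ST x) (Hmne ps Hp)) as [H1 [H2 H3]].
    rewrite <- H3. apply (Hcons _ _ _ H1).
    + replace (S (pred (length (map lab ps)))) with (length (map lab ps)); [exact H2|].
      destruct (map lab ps) eqn:HH; [destruct (Hmne ps Hp HH)|simpl; lia].
    + rewrite <- Hlab by exact Hp. exact Ho.
  - intros ps t Hp He Ho. fold E lab r in Hp, He, Ho |- *.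
    set (q := proj1_sig (last ps r)).
    assert (Hq : tree_node JF tau x q) by apply (proj2_sig (last ps r)).
    assert (Hqne : q <> []) by apply Hne.
    assert (Hqt : tree_node JF tau x (q ++ [t])).
    { destruct Hq as [[_ Hf] [Hh Hc]].
      destruct (snoc_facts q t (ST x) Hqne) as [H1 [H2 H3]].
      assert (HL : length q = S (pred (length q))) by (destruct q; [congruence|simpl; lia]).
      split; [split|split].
      - intros HH. apply app_eq_nil in HH. destruct HH as [_ HH]; discriminate.
      - intros i a b Ha Hb.
        destruct (Nat.lt_ge_cases (S i) (length q)) as [Hi|Hi].
        + rewrite nth_error_app1 in Ha, Hb by lia. eapply Hf; eauto.
        + destruct (Nat.eq_dec i (pred (length q))) as [->|Hi2].
          * rewrite H1 in Ha. rewrite <- HL, H2 in Hb. injection Ha; injection Hb; intros <- <-.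
            exact He.
          * exfalso. assert (nth_error (q ++ [t]) (S i) = None).
            { apply nth_error_None. rewrite length_app. simpl. lia. }
            congruence.
      - destruct q; [congruence|exact Hh].
      - intros i a b Ha Hb Hoa.
        destruct (Nat.lt_ge_cases (S i) (length q)) as [Hi|Hi].
        + rewrite nth_error_app1 in Ha, Hb by lia.
          rewrite firstn_app. replace (S i - length q) with 0 by lia. rewrite app_nil_r.
          eapply Hc; eauto.
        + destruct (Nat.eq_dec i (pred (length q))) as [->|Hi2].
          * rewrite H1 in Ha. rewrite <- HL, H2 in Hb. injection Ha; injection Hb; intros <- <-.
            rewrite H3. unfold q. rewrite Inv' by exact Hp. apply Ho.
            rewrite Hlab by exact Hp. rewrite <- Inv' by exact Hp. exact Hoa.
          * exfalso. assert (nth_error (q ++ [t]) (S i) = None).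
            { apply nth_error_None. rewrite length_app. simpl. lia. }
            congruence. }
    exists (exist _ (q ++ [t]) Hqt). split.
    + exists t. reflexivity.
    + unfold lab. simpl. apply last_last.
  - exact Vt.
Qed.


Theorem mainTheorem8 (FS : fact_space) (JF : jframe FS) (B : branch FS -> FS)
  (Hcomp : complementary JF) (Hcons : consistent_be JF B) :
  forall x : FS, Fd JF x ->
  forall Iv : FS -> tv, is_interp Iv ->
  (forall tau : pstrat FS, valid_pos JF PF tau ->
     val (root_pos JF tau x) B Iv =
     tneg (tv_sup (fun v => exists sigma : strat FS,
             valid_gen JF PT sigma /\ v = u JF B Iv x sigma (gen_of_pos tau))))
  /\
  (forall tau : strat FS, valid_gen JF PF tau ->
     val (root_gen JF tau x) B Iv =
     tneg (tv_sup (fun v => exists sigma : strat FS,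
             valid_gen JF PT sigma /\ v = u JF B Iv x sigma tau))).
Proof.
  intros x Hx Iv HI. split.
  - intros tau Vt. refine (gen_val JF _ _ _ x (gen_of_pos tau) B Iv _ (pos_hyp JF tau x Vt) Hx Hcons HI).
  - intros tau Vt. refine (gen_val JF _ _ _ x tau B Iv _ (gen_hyp JF tau x Vt) Hx Hcons HI).
Qed.
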